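(* Suppose $(\mathcal E,W)$ is a product system and $u$ is a normalized unit of $\mathcal E$. Let $\mathcal F_t=\mathbb Cu_t$ and let $\mathcal F'_t=\mathcal E_t\ominus\tilde{\mathcal F}_t$, where $\tilde{\mathcal F}_t=\overline{\mathrm{span}}\{x\otimes y:x\in\mathcal E_r,\ \langle x,u_r\rangle=0,\ y\in\mathcal E_{t-r},\ \langle y,u_{t-r}\rangle=0,\ \text{for some }0<r<t\}$. Then, for all $s,t>0$, $u_s\otimes\mathcal F'_t\subset\mathcal F'_{s+t}$ and $\mathcal F'_s\otimes u_t\subset\mathcal F'_{s+t}$ (under the identification $\mathcal E_{s+t}\cong\mathcal E_s\otimes\mathcal E_t$ given by $W$).
   Context: A product system is a measurable family of separable Hilbert spaces $(\mathcal E_t)_{t>0}$ with associative unitaries $W_{s,t}:\mathcal E_{s+t}\to\mathcal E_s\otimes\mathcal E_t$, used to identify $\mathcal E_{s+t}$ with $\mathcal E_s\otimes\mathcal E_t$. A normalized unit is a measurable section $(u_t)$ with $\|u_t\|=1$ and $u_{s+t}=u_s\otimes u_t$ under these identifications. *)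

(* Defs.v *)
From HB Require Import structures.
From mathcomp Require Import all_boot all_order all_algebra.
From mathcomp Require Import complex.
From mathcomp Require Import reals.
Set Implicit Arguments. Unset Strict Implicit. Unset Printing Implicit Defensive.
Import Order.TTheory GRing.Theory Num.Theory.
Local Open Scope ring_scope.
Local Open Scope complex_scope.

Definition castE (I : Type) (E : I -> Type) (a b : I) (e : a = b) (x : E a) : E b :=
  eq_rect a E x b e.

Section Hilbert.
Variable R : realType.
Notation C := (R[i]).
Variable V : lmodType C.
Variable ip : V -> V -> C.

Definition is_inner_product : Prop :=
  [/\ forall (a : C) (x y z : V), ip (a *: x + y) z = a * ip x z + ip y z,
      forall x y : V, ip x y = (ip y x)^*,
      forall x : V, 0 <= ip x x
    & forall x : V, ip x x = 0 -> x = 0].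

Definition dist2 (x y : V) : C := ip (x - y) (x - y).

Definition ip_complete : Prop :=
  forall f : nat -> V,
    (forall eps : C, 0 < eps -> exists N, forall m n, (N <= m)%N -> (N <= n)%N ->
       dist2 (f m) (f n) < eps) ->
    exists x : V, forall eps : C, 0 < eps -> exists N, forall n, (N <= n)%N ->
       dist2 (f n) x < eps.

Definition in_span (S : V -> Prop) (w : V) : Prop :=
  exists n (c : 'I_n -> C) (v : 'I_n -> V),
    (forall i, S (v i)) /\ w = \sum_(i < n) c i *: v i.

Definition in_closed_span (S : V -> Prop) (w : V) : Prop :=
  forall eps : C, 0 < eps -> exists v, in_span S v /\ dist2 w v < eps.

Definition ortho_closed_span (S : V -> Prop) (z : V) : Prop :=
  forall w, in_closed_span S w -> ip w z = 0.
End Hilbert.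

(* A product system: a family (E_t)_{t>0} of complex Hilbert spaces together
   with the maps x \otimes y := W_{s,t}^{-1}(x (x) y) : E_s x E_t -> E_{s+t}.
   W_{s,t} being a unitary onto the Hilbert tensor product is encoded by:
   bilinearity, <x(x)y, x'(x)y'> = <x,x'><y,y'>, and density of the span of
   elementary tensors; associativity of W is encoded by (x(x)y)(x)z = x(x)(y(x)z). *)
Record product_system (R : realType) := ProductSystem {
  PE : R -> lmodType (R[i]);
  Pip : forall t, PE t -> PE t -> R[i];
  Ptens : forall s t, PE s -> PE t -> PE (s + t);
  Pip_inner : forall t : R, 0 < t -> is_inner_product (@Pip t);
  Pcomplete : forall t : R, 0 < t -> ip_complete (@Pip t);
  Ptens_linl : forall s t : R, 0 < s -> 0 < t -> forall (a : R[i]) (x x' : PE s) (y : PE t),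
     Ptens (a *: x + x') y = a *: Ptens x y + Ptens x' y;
  Ptens_linr : forall s t : R, 0 < s -> 0 < t -> forall (a : R[i]) (x : PE s) (y y' : PE t),
     Ptens x (a *: y + y') = a *: Ptens x y + Ptens x y';
  Ptens_ip : forall s t : R, 0 < s -> 0 < t -> forall (x x' : PE s) (y y' : PE t),
     Pip (Ptens x y) (Ptens x' y') = Pip x x' * Pip y y';
  Ptens_dense : forall s t : R, 0 < s -> 0 < t -> forall w : PE (s + t),
     in_closed_span (@Pip (s + t)) (fun v => exists x y, v = Ptens x y) w;
  Ptens_assoc : forall r s t : R, 0 < r -> 0 < s -> 0 < t ->
     forall (x : PE r) (y : PE s) (z : PE t),
     @castE R PE _ _ (addrA r s t) (Ptens x (Ptens y z)) = Ptens (Ptens x y) z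
}.

(* normalized unit (measurability omitted) *)
Definition normalized_unit (R : realType) (P : product_system R)
    (u : forall t, PE P t) : Prop :=
  (forall t : R, 0 < t -> Pip (u t) (u t) = 1) /\
  (forall s t : R, 0 < s -> 0 < t -> u (s + t) = Ptens (u s) (u t)).

(* generating set of \tilde F_t : x (x) y with x in E_r, y in E_{t-r}, 0<r<t,
   x _|_ u_r, y _|_ u_{t-r} (written with t' := t - r, e : r + t' = t). *)
Definition Ftilde_gen (R : realType) (P : product_system R)
    (u : forall t, PE P t) (t : R) (w : PE P t) : Prop :=
  exists (r t' : R) (e : r + t' = t) (x : PE P r) (y : PE P t'),
    [/\ 0 < r, 0 < t', Pip x (u r) = 0, Pip y (u t') = 0
      & w = @castE R (PE P) _ _ e (Ptens x y)].

Definition Fprime (R : realType) (P : product_system R)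
    (u : forall t, PE P t) (t : R) (z : PE P t) : Prop :=
  ortho_closed_span (@Pip R P t) (@Ftilde_gen R P u t) z.
Arguments Fprime {R P} u t z.
Arguments Ftilde_gen {R P} u t w.

(* Main.v *)
Require Import Defs.
From HB Require Import structures.
From mathcomp Require Import all_boot all_order all_algebra.
From mathcomp Require Import complex reals ring.
Import Order.TTheory GRing.Theory Num.Theory.
Local Open Scope ring_scope.
Set Implicit Arguments. Unset Strict Implicit.

Section IP.
Variable R : realType.
Local Notation C := (R[i]).
Variable V : lmodType C.
Variable ip : V -> V -> C.
Hypothesis hip : is_inner_product ip.

Lemma ipDZl a x y z : ip (a *: x + y) z = a * ip x z + ip y z.
Proof. by case: hip. Qed.
Lemma ipC x y : ip x y = conjc (ip y x).
Proof. by case: hip. Qed.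
Lemma ip_ge0 x : 0 <= ip x x.
Proof. by case: hip. Qed.
Lemma ip0l z : ip 0 z = 0.
Proof. by have := ipDZl (-1) z z z; rewrite scaleN1r addNr mulN1r addNr. Qed.
Lemma ipZl a x z : ip (a *: x) z = a * ip x z.
Proof. by have := ipDZl a x 0 z; rewrite addr0 ip0l addr0. Qed.
Lemma ipDl x y z : ip (x + y) z = ip x z + ip y z.
Proof. by have := ipDZl 1 x y z; rewrite scale1r mul1r. Qed.
Lemma ipNl x z : ip (- x) z = - ip x z.
Proof. by rewrite -scaleN1r ipZl mulN1r. Qed.
Lemma ipBl x y z : ip (x - y) z = ip x z - ip y z.
Proof. by rewrite ipDl ipNl. Qed.
Lemma ipZr a x z : ip x (a *: z) = conjc a * ip x z.
Proof. by rewrite ipC ipZl rmorphM /= -ipC. Qed.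
Lemma ipBr x y z : ip x (y - z) = ip x y - ip x z.
Proof. by rewrite ipC ipBl rmorphB /= -!ipC. Qed.
Lemma ip_real x : conjc (ip x x) = ip x x.
Proof. by rewrite -ipC. Qed.

Definition sqn (c : C) := c * conjc c.
Lemma sqn_ge0 c : 0 <= sqn c.
Proof. exact: mulcJ_ge0. Qed.

Lemma ip_bound0 a z :
  sqn (ip a z) * (1 + ip z z) <= (ip a a * (1 + ip z z)) * (1 + ip z z).
Proof.
have H := ip_ge0 ((1 + ip z z) *: a - ip a z *: z).
rewrite !ipBl !ipZl !ipBr !ipZr rmorphD rmorph1 /= ip_real [ip z a]ipC in H.
rewrite -subr_ge0.
have -> : ip a a * (1 + ip z z) * (1 + ip z z) - sqn (ip a z) * (1 + ip z z) =
  ((1 + ip z z) * ((1 + ip z z) * ip a a - (ip a z)^* * ip a z) -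
      ip a z * ((1 + ip z z) * (ip a z)^* - (ip a z)^* * ip z z)) + sqn (ip a z).
  by rewrite /sqn; ring.
by apply: addr_ge0 => //; apply: sqn_ge0.
Qed.

Lemma ip_bound a z : sqn (ip a z) <= (1 + ip z z) * ip a a.
Proof.
have hp : 0 < 1 + ip z z by apply: ltr_wpDr; [exact: ip_ge0|exact: ltr01].
by rewrite -(ler_pM2r hp) [_ * ip a a]mulrC; apply: ip_bound0.
Qed.

Definition linC (f : V -> C) := forall a x y, f (a *: x + y) = a * f x + f y.
Definition bnd (f : V -> C) := exists M, 0 <= M /\ forall x, sqn (f x) <= M * ip x x.

Section Lin.
Variable f : V -> C.
Hypothesis fl : linC f.
Lemma lin0 : f 0 = 0.
Proof. by have := fl (-1) 0 0; rewrite scaleN1r oppr0 addr0 mulN1r addNr. Qed.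
Lemma linZ a x : f (a *: x) = a * f x.
Proof. by have := fl a x 0; rewrite addr0 lin0 addr0. Qed.
Lemma linD x y : f (x + y) = f x + f y.
Proof. by have := fl 1 x y; rewrite scale1r mul1r. Qed.
Lemma linB x y : f (x - y) = f x - f y.
Proof. by rewrite linD -scaleN1r linZ mulN1r. Qed.
End Lin.

Lemma lin_ip z : linC (fun x => ip x z).
Proof. by move=> a x y; rewrite ipDZl. Qed.

Lemma bnd_ip z : bnd (fun x => ip x z).
Proof.
exists (1 + ip z z); split; last by move=> x; apply: ip_bound.
by apply: addr_ge0; [exact: ler01|exact: ip_ge0].
Qed.

Lemma sqnD p q : sqn (p + q) <= 2 * sqn p + 2 * sqn q.
Proof.
rewrite -subr_ge0.
have -> : 2 * sqn p + 2 * sqn q - sqn (p + q) = sqn (p - q).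
  by rewrite /sqn !rmorphD rmorphN /=; ring.
exact: sqn_ge0.
Qed.
Lemma sqnM p q : sqn (p * q) = sqn p * sqn q.
Proof. by rewrite /sqn rmorphM /=; ring. Qed.
Lemma sqnN p : sqn (- p) = sqn p.
Proof. by rewrite /sqn rmorphN /= mulrNN. Qed.

Lemma lin_sub f g k : linC f -> linC g -> linC (fun x => f x - k * g x).
Proof. by move=> hf hg a x y; rewrite hf hg; ring. Qed.

Lemma bnd_sub f g k : bnd f -> bnd g -> bnd (fun x => f x - k * g x).
Proof.
move=> [Mf [Mf0 hf]] [Mg [Mg0 hg]].
exists (2 * Mf + 2 * (sqn k * Mg)); split.
  by apply: addr_ge0; apply: mulr_ge0 => //; apply: mulr_ge0 => //; exact: sqn_ge0.
move=> x; apply: le_trans (sqnD _ _) _.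
have -> : (2 * Mf + 2 * (sqn k * Mg)) * ip x x =
  2 * (Mf * ip x x) + 2 * (sqn k * (Mg * ip x x)) by ring.
apply: lerD; apply: ler_wpM2l => //.
rewrite sqnN sqnM; apply: ler_wpM2l; first exact: sqn_ge0.
exact: hg.
Qed.

Lemma vanish (S : V -> Prop) f : linC f -> bnd f -> (forall v, S v -> f v = 0) ->
  forall w, in_closed_span ip S w -> f w = 0.
Proof.
move=> fl [M [M0 fb]] hS w hw.
have hspan v : in_span S v -> f v = 0.
  move=> [n [c [v' [hv ->]]]].
  apply: (big_ind (fun x => f x = 0)) => [|x y hx hy|i _].
  - exact: lin0.
  - by rewrite linD // hx hy addr0.
  - by rewrite linZ // hS // mulr0.
apply/eqP; apply: contraT => hne.
have kp : 0 < sqn (f w).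
  by rewrite lt_def sqn_ge0 andbT /sqn mulf_neq0 // conjc_eq0.
have Mp : 0 < 1 + M by apply: ltr_wpDr M0 ltr01.
have ep : 0 < sqn (f w) / (1 + M) by rewrite divr_gt0.
have [v [hv hd]] := hw _ ep.
have fv : f w = f (w - v) by rewrite linB // (hspan v hv) subr0.
have : sqn (f w) <= M * (sqn (f w) / (1 + M)).
  rewrite {1}fv; apply: le_trans (fb _) _.
  apply: ler_pM => //; [exact: ip_ge0|exact: ltW].
rewrite mulrA ler_pdivlMr // -subr_ge0.
have -> : M * sqn (f w) - sqn (f w) * (1 + M) = - sqn (f w) by ring.
by rewrite oppr_ge0 => h; have := lt_le_trans kp h; rewrite ltxx.
Qed.
End IP.

Section PS.
Variable R : realType.
Variable P : product_system R.
Local Notation E := (PE P).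
Local Notation C := (R[i]).

Lemma cast_irr a b (e e' : a = b) (x : E a) :
  @castE R E a b e x = @castE R E a b e' x.
Proof. by rewrite (eq_irrelevance e e'). Qed.
Lemma cast_id a (e : a = a) (x : E a) : @castE R E a a e x = x.
Proof. by rewrite (eq_irrelevance e erefl). Qed.
Lemma cast_comp a b c (e1 : a = b) (e2 : b = c) (x : E a) :
  @castE R E b c e2 (@castE R E a b e1 x) = @castE R E a c (etrans e1 e2) x.
Proof. by case: c / e2; case: b / e1. Qed.
Lemma cast_ip a b (e : a = b) (x : E a) (y : E b) :
  Pip (@castE R E a b e x) y = Pip x (@castE R E b a (esym e) y).
Proof. by move: y; case: b / e. Qed.
Lemma cast_ip2 a b (e e' : a = b) (x y : E a) :
  Pip (@castE R E a b e x) (@castE R E a b e' y) = Pip x y.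
Proof. by rewrite (cast_irr e' e); clear e'; case: b / e. Qed.
Lemma cast_lin a b (e : a = b) (c : C) (x y : E a) :
  @castE R E a b e (c *: x + y) = c *: @castE R E a b e x + @castE R E a b e y.
Proof. by case: b / e. Qed.

Variable u : forall t, E t.
Hypothesis hu : normalized_unit u.

Lemma u1 t : 0 < t -> Pip (u t) (u t) = 1.
Proof. by case: hu => h _; apply: h. Qed.
Lemma uM s t : 0 < s -> 0 < t -> u (s + t) = Ptens (u s) (u t).
Proof. by case: hu => _ h; apply: h. Qed.

Lemma inner t : 0 < t -> is_inner_product (@Pip R P t).
Proof. exact: Pip_inner. Qed.

Lemma Fprime_gen t (z : E t) (w : E t) : 0 < t -> Fprime u t z -> Ftilde_gen u t w ->
  Pip w z = 0.
Proof.
move=> ht hz hw; apply: hz => eps he; exists w; split.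
  exists 1%N, (fun _ => 1), (fun _ => w); split => //.
  by rewrite big_ord1 scale1r.
by rewrite /dist2 subrr ip0l //; apply: inner.
Qed.

Lemma decompA d t' (hd : 0 < d) (ht' : 0 < t') (b : E d) (y : E t') (z : E (d + t')) :
  Pip y (u t') = 0 -> Fprime u (d + t') z ->
  Pip (Ptens b y) z = Pip b (u d) * Pip (Ptens (u d) y) z.
Proof.
move=> hy hz.
have hdt : 0 < d + t' by apply: addr_gt0.
set c := Pip b (u d).
have hb' : Pip (b - c *: u d) (u d) = 0.
  by rewrite (ipBl (inner hd)) (ipZl (inner hd)) u1 // mulr1 subrr.
have -> : Ptens b y = c *: Ptens (u d) y + Ptens (b - c *: u d) y.
  by rewrite -Ptens_linl // [c *: u d + _]addrC subrK.
rewrite (ipDZl (inner hdt)).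
have -> : Pip (Ptens (b - c *: u d) y) z = 0.
  by apply: (Fprime_gen hdt hz); exists d, t', erefl, (b - c *: u d), y; split.
by rewrite addr0.
Qed.

Lemma decompB r d (hr : 0 < r) (hd : 0 < d) (x : E r) (b : E d) (z : E (r + d)) :
  Pip x (u r) = 0 -> Fprime u (r + d) z ->
  Pip (Ptens x b) z = Pip b (u d) * Pip (Ptens x (u d)) z.
Proof.
move=> hx hz.
have hrd : 0 < r + d by apply: addr_gt0.
set c := Pip b (u d).
have hb' : Pip (b - c *: u d) (u d) = 0.
  by rewrite (ipBl (inner hd)) (ipZl (inner hd)) u1 // mulr1 subrr.
have -> : Ptens x b = c *: Ptens x (u d) + Ptens x (b - c *: u d).
  by rewrite -Ptens_linr // [c *: u d + _]addrC subrK.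
rewrite (ipDZl (inner hrd)).
have -> : Pip (Ptens x (b - c *: u d)) z = 0.
  by apply: (Fprime_gen hrd hz); exists r, d, erefl, x, (b - c *: u d); split.
by rewrite addr0.
Qed.

Lemma bnd_comp a b (ha : 0 < a) (hb : 0 < b) (g : E a -> E b) (k : C)
  (hk : 0 <= k) (hg : forall x, Pip (g x) (g x) = k * Pip x x) (W : E b) :
  bnd (@Pip R P a) (fun x => Pip (g x) W).
Proof.
exists ((1 + Pip W W) * k); split.
  by apply: mulr_ge0 => //; apply: addr_ge0; [exact: ler01|exact: (ip_ge0 (inner hb))].
move=> x; apply: le_trans (ip_bound (inner hb) _ _) _.
by rewrite hg mulrA.
Qed.


Lemma Tu_split r d t s (hr : 0 < r) (hd : 0 < d) (ht : 0 < t) (z : E t) (h : r + d = s)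
  (e : r + (d + t) = s + t) :
  Ptens (u s) z = @castE R E _ _ e (Ptens (u r) (Ptens (u d) z)).
Proof.
move: e; case: s / h => e.
by rewrite uM // -Ptens_assoc //; apply: cast_irr.
Qed.

Lemma part1 s t (hs : 0 < s) (ht : 0 < t) (z : E t) :
  Fprime u t z -> Fprime u (s + t) (Ptens (u s) z).
Proof.
move=> hz w hw.
have hst : 0 < s + t by apply: addr_gt0.
apply: (vanish (inner hst) (lin_ip (inner hst) _) (bnd_ip (inner hst) _) _ hw).
move=> _ [r [t' [e [x [y [hr ht' hx hy ->]]]]]].
case: (ltgtP r s) => hrs.
- have hsr : 0 < s - r by rewrite subr_gt0.
  have ht'e : t' = s - r + t by apply: (addrI r); rewrite e; ring.
  subst t'.
  have hsrt : 0 < s - r + t by apply: addr_gt0.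
  rewrite (Tu_split hr hsr ht z (_ : r + (s - r) = s) e); last by ring.
  by rewrite cast_ip2 Ptens_ip // hx mul0r.
- have [d hd hrd] : exists2 d, 0 < d & r = s + d.
    by exists (r - s); [rewrite subr_gt0 | ring].
  subst r.
  have htd : t = d + t' by apply: (addrI s); rewrite -e; ring.
  subst t.
  have hsd : 0 < s + d by apply: addr_gt0.
  have hdt : 0 < d + t' by apply: addr_gt0.
  have key : forall x' : E (s + d),
      Pip (@castE R E _ _ e (Ptens x' y)) (Ptens (u s) z)
      - Pip (Ptens (u d) y) z * Pip x' (u (s + d)) = 0.
    move=> x'.
    apply: (vanish (inner hsd)
      (f := fun x1 => Pip (@castE R E _ _ e (Ptens x1 y)) (Ptens (u s) z)
      - Pip (Ptens (u d) y) z * Pip x1 (u (s + d))) _ _ _ (Ptens_dense hs hd x')).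
    + apply: lin_sub; last exact: lin_ip (inner hsd) _.
      by move=> a x1 x2 /=; rewrite Ptens_linl // cast_lin (ipDZl (inner hst)).
    + apply: bnd_sub; last exact: (bnd_ip (inner _) _).
      apply: (bnd_comp hsd hst (g := fun x1 => @castE R E _ _ e (Ptens x1 y)) (k := Pip y y)).
        exact: (ip_ge0 (inner ht')).
      by move=> x1; rewrite cast_ip2 Ptens_ip // mulrC.
    + move=> _ [a [b ->]].
      rewrite -Ptens_assoc // cast_comp cast_id Ptens_ip // uM // Ptens_ip //.
      rewrite (decompA hd ht' b hy hz); ring.
  by have := key x; rewrite hx mulr0 subr0.
- subst r.
  have ht2 : t' = t by apply: (addrI s).
  subst t'.
  by rewrite cast_id Ptens_ip // hx mul0r.
Qed.

Lemma part2 s t (hs : 0 < s) (ht : 0 < t) (z : E s) :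
  Fprime u s z -> Fprime u (s + t) (Ptens z (u t)).
Proof.
move=> hz w hw.
have hst : 0 < s + t by apply: addr_gt0.
apply: (vanish (inner hst) (lin_ip (inner hst) _) (bnd_ip (inner hst) _) _ hw).
move=> _ [r [t' [e [x [y [hr ht' hx hy ->]]]]]].
case: (ltgtP r s) => hrs.
- have [d hd hsd] : exists2 d, 0 < d & s = r + d.
    by exists (s - r); [rewrite subr_gt0 | ring].
  subst s.
  have ht'e : t' = d + t by apply: (addrI r); rewrite e; ring.
  subst t'.
  have hrd : 0 < r + d by apply: addr_gt0.
  have hdt : 0 < d + t by apply: addr_gt0.
  have key : forall y' : E (d + t),
      Pip (@castE R E _ _ e (Ptens x y')) (Ptens z (u t))
      - Pip (Ptens x (u d)) z * Pip y' (u (d + t)) = 0.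
    move=> y'.
    apply: (vanish (inner hdt)
      (f := fun y1 => Pip (@castE R E _ _ e (Ptens x y1)) (Ptens z (u t))
      - Pip (Ptens x (u d)) z * Pip y1 (u (d + t))) _ _ _ (Ptens_dense hd ht y')).
    + apply: lin_sub; last exact: lin_ip (inner hdt) _.
      by move=> a x1 x2 /=; rewrite Ptens_linr // cast_lin (ipDZl (inner hst)).
    + apply: bnd_sub; last exact: (bnd_ip (inner _) _).
      apply: (bnd_comp hdt hst (g := fun y1 => @castE R E _ _ e (Ptens x y1)) (k := Pip x x)).
        exact: (ip_ge0 (inner hr)).
      by move=> y1; rewrite cast_ip2 Ptens_ip.
    + move=> _ [b [c ->]].
      rewrite (cast_irr e (addrA r d t)) Ptens_assoc // Ptens_ip // uM // Ptens_ip //.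
      rewrite (decompB hr hd b hx hz); ring.
  by have := key y; rewrite hy mulr0 subr0.
- have [d hd hrd] : exists2 d, 0 < d & r = s + d.
    by exists (r - s); [rewrite subr_gt0 | ring].
  subst r.
  have htd : t = d + t' by apply: (addrI s); rewrite -e; ring.
  subst t.
  rewrite cast_ip uM // (cast_irr (esym e) (addrA s d t')) Ptens_assoc //.
  by rewrite Ptens_ip // hy mulr0.
- subst r.
  have ht2 : t' = t by apply: (addrI s).
  subst t'.
  by rewrite cast_id Ptens_ip // hy mulr0.
Qed.
End PS.

Theorem mainTheorem14 (R : realType) (P : product_system R)
    (u : forall t : R, PE P t) (hu : normalized_unit u) :
  forall s t : R, 0 < s -> 0 < t ->
    (forall z : PE P t, Fprime u t z -> Fprime u (s + t) (Ptens (u s) z)) /\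
    (forall z : PE P s, Fprime u s z -> Fprime u (s + t) (Ptens z (u t))).
Proof.
move=> s t hs ht; split => z hz; [exact: part1 | exact: part2].
Qed.
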